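(* Let $\phi\colon A_1\to A_2$ be a surjective morphism of $C^\infty$-rings and $I\le A_2$ an ideal. Then $\phi^{-1}(\sqrt[\infty]{I})=\sqrt[\infty]{\phi^{-1}(I)}$.
   Context: A $C^\infty$-ring is a product-preserving functor from the category of $\mathbb R^n$ ($n\ge0$) and smooth maps to sets; ideals are ideals of the underlying commutative $\mathbb R$-algebra; $A\{a^{-1}\}$ is the $C^\infty$-ring obtained by universally inverting $a$ among $C^\infty$-rings; $\sqrt[\infty]{I}:=\{f\in A\mid (A/I)\{f^{-1}\}\cong0\}$. *)

(* Defs.v *)
From HB Require Import structures.
From mathcomp Require Import all_boot all_order all_algebra.
From mathcomp Require Import all_classical all_reals all_analysis.
Set Implicit Arguments. Unset Strict Implicit. Unset Printing Implicit Defensive.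
Import Order.TTheory GRing.Theory Num.Theory.
Import numFieldNormedType.Exports.
Local Open Scope ring_scope.

Section Smooth.
Variable R : realType.

(* C^k functions R^n -> R, via iterated partial derivatives (continuity is
   required at every level; it is redundant for k >= 1 but harmless). *)
Fixpoint Ck (n k : nat) (g : 'rV[R]_n -> R) : Prop :=
  match k with
  | 0 => continuous g
  | k'.+1 => continuous g /\
      forall i : 'I_n, (forall x, derivable g x (delta_mx 0 i)) /\
        Ck k' (fun x => derive g x (delta_mx 0 i))
  end.

Definition smooth (n m : nat) (f : 'rV[R]_n -> 'rV[R]_m) : Prop :=
  forall (j : 'I_m) (k : nat), Ck k (fun x => f x 0 j).

Lemma Ck_cst n k (c : R) : Ck k (fun _ : 'rV[R]_n => c).
Proof.
elim: k c => [|k IH] c /=; first exact: cst_continuous.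
split; first exact: cst_continuous.
move=> i; split; first by move=> x; exact: (derivable_cst c).
have -> : (fun x => derive (fun _ : 'rV[R]_n => c) x (delta_mx 0 i)) = fun _ => 0.
  by apply/funext => x; exact: (derive_cst c).
exact: IH.
Qed.

Lemma Ck_coord n k (i : 'I_n) : Ck k (fun x : 'rV[R]_n => x 0 i).
Proof.
have cc : continuous (fun x : 'rV[R]_n => x 0 i) by exact: coord_continuous.
case: k => [|k] //=; split => // l; split.
  by move=> x; apply: diff_derivable; exact: differentiable_coord.
have @f : {linear 'rV[R]_n -> R}.
  by exists (fun N : 'rV[R]_n => N 0 i); do 2![eexists]; do ?[constructor];
     rewrite ?mxE// => ? *; rewrite ?mxE//; move=> ?; rewrite !mxE.
have -> : (fun x => derive (fun x0 : 'rV[R]_n => x0 0 i) x (delta_mx 0 l))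
          = fun _ => (delta_mx 0 l : 'rV[R]_n) 0 i.
  apply/funext => x.
  rewrite (_ : (fun x0 : 'rV[R]_n => x0 0 i) = f) //.
  have fc : continuous f by exact: (@coord_continuous R 1 n 0 i).
  rewrite deriveE; last exact: linear_differentiable.
  by rewrite diff_lin.
exact: Ck_cst.
Qed.

Lemma Ck_add n k (f g : 'rV[R]_n -> R) :
  Ck k f -> Ck k g -> Ck k (fun x => f x + g x).
Proof.
elim: k f g => [|k IH] f g /=.
  by move=> cf cg; by move=> x; exact: (continuousD (cf x) (cg x)).
move=> [cf df] [cg dg]; split; first by move=> x; exact: (continuousD (cf x) (cg x)).
move=> i; have [df1 df2] := df i; have [dg1 dg2] := dg i; split.
  by move=> x; exact: (derivableD (df1 x) (dg1 x)).
have -> : (fun x => derive (fun x0 => f x0 + g x0) x (delta_mx 0 i)) =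
   fun x => derive f x (delta_mx 0 i) + derive g x (delta_mx 0 i).
  by apply/funext => x; exact: (deriveD (df1 x) (dg1 x)).
exact: IH.
Qed.

Lemma Ck_mono n k (f : 'rV[R]_n -> R) : Ck k.+1 f -> Ck k f.
Proof.
elim: k f => [|k IH] f; first by case.
move=> [cf df]; split => // i; have [d1 d2] := df i; split => //.
exact: IH.
Qed.

Lemma Ck_mul n k (f g : 'rV[R]_n -> R) :
  Ck k f -> Ck k g -> Ck k (fun x => f x * g x).
Proof.
elim: k f g => [|k IH] f g /=.
  by move=> cf cg; by move=> x; exact: (continuousM (cf x) (cg x)).
move=> [cf df] [cg dg]; split; first by move=> x; exact: (continuousM (cf x) (cg x)).
move=> i; have [df1 df2] := df i; have [dg1 dg2] := dg i; split.
  by move=> x; exact: (derivableM (df1 x) (dg1 x)).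
have -> : (fun x => derive (fun x0 => f x0 * g x0) x (delta_mx 0 i)) =
   fun x => f x * derive g x (delta_mx 0 i) + g x * derive f x (delta_mx 0 i).
  by apply/funext => x; exact: (deriveM (df1 x) (dg1 x)).
apply: Ck_add; apply: IH => //; apply: Ck_mono; split => //.
Qed.

Definition proj_map (n : nat) (i : 'I_n) : 'rV[R]_n -> 'rV[R]_1 :=
  fun x => \row_(j < 1) x 0 i.
Definition add_map : 'rV[R]_2 -> 'rV[R]_1 :=
  fun x => \row_(j < 1) (x 0 ord0 + x 0 ord_max).
Definition mul_map : 'rV[R]_2 -> 'rV[R]_1 :=
  fun x => \row_(j < 1) (x 0 ord0 * x 0 ord_max).
Definition const_map (c : R) : 'rV[R]_0 -> 'rV[R]_1 :=
  fun _ => \row_(j < 1) c.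

Lemma smooth_proj n (i : 'I_n) : smooth (proj_map i).
Proof.
move=> j k; rewrite /proj_map.
have -> : (fun x : 'rV[R]_n => (\row_(j0 < 1) x 0 i) 0 j) = fun x => x 0 i.
  by apply/funext => x; rewrite mxE.
exact: Ck_coord.
Qed.

Lemma smooth_add : smooth add_map.
Proof.
move=> j k; rewrite /add_map.
have -> : (fun x : 'rV[R]_2 => (\row_(j0 < 1) (x 0 ord0 + x 0 ord_max)) 0 j)
  = fun x => x 0 ord0 + x 0 ord_max by apply/funext => x; rewrite mxE.
by apply: Ck_add; exact: Ck_coord.
Qed.

Lemma smooth_mul : smooth mul_map.
Proof.
move=> j k; rewrite /mul_map.
have -> : (fun x : 'rV[R]_2 => (\row_(j0 < 1) (x 0 ord0 * x 0 ord_max)) 0 j)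
  = fun x => x 0 ord0 * x 0 ord_max by apply/funext => x; rewrite mxE.
by apply: Ck_mul; exact: Ck_coord.
Qed.

Lemma smooth_const c : smooth (const_map c).
Proof.
move=> j k; rewrite /const_map.
have -> : (fun x : 'rV[R]_0 => (\row_(j0 < 1) c) 0 j) = fun _ => c
  by apply/funext => x; rewrite mxE.
exact: Ck_cst.
Qed.

End Smooth.

(* A C^oo-ring: a functor F from the category with objects R^n (n >= 0) and
   smooth maps to types, preserving finite products: F(R^n), with the maps
   F(pi_i) : F(R^n) -> F(R), is an n-fold product of F(R)
   (ctuple is the inverse of x |-> (F(pi_i) x)_i). *)
Record CinfRing (R : realType) := {
  cobj : nat -> Type;
  cmap : forall (n m : nat) (f : 'rV[R]_n -> 'rV[R]_m), smooth f -> cobj n -> cobj m;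
  cmap_id : forall n (h : smooth (fun x : 'rV[R]_n => x)) (x : cobj n),
      cmap h x = x;
  cmap_comp : forall n m p (f : 'rV[R]_n -> 'rV[R]_m) (g : 'rV[R]_m -> 'rV[R]_p)
      (hf : smooth f) (hg : smooth g) (hgf : smooth (fun x => g (f x))) (x : cobj n),
      cmap hgf x = cmap hg (cmap hf x);
  ctuple : forall n, ('I_n -> cobj 1) -> cobj n;
  ctupleK : forall n (x : cobj n),
      ctuple (fun i => cmap (@smooth_proj R _ i) x) = x;
  cprojK : forall n (a : 'I_n -> cobj 1) (i : 'I_n),
      cmap (@smooth_proj R _ i) (ctuple a) = a i
}.
Arguments cobj {R}.
Arguments cmap {R} _ {n m f} : rename.
Arguments ctuple {R} _ {n} : rename.

Record CinfMorph (R : realType) (A B : CinfRing R) := {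
  cfun : forall n, cobj A n -> cobj B n;
  mnat : forall n m (f : 'rV[R]_n -> 'rV[R]_m) (hf : smooth f) (x : cobj A n),
      cfun (cmap A hf x) = cmap B hf (cfun x)
}.
Arguments cfun {R A B} _ {n}.

Section Ops.
Variables (R : realType) (A : CinfRing R).

Definition empty_fun (T : Type) (i : 'I_0) : T :=
  False_rect T (notF (ltn_ord i)).

Definition pair2 (a b : cobj A 1) : 'I_2 -> cobj A 1 :=
  fun i => if i == ord0 then a else b.

Definition cadd (a b : cobj A 1) : cobj A 1 :=
  cmap A (@smooth_add R) (ctuple A (pair2 a b)).
Definition cmul (a b : cobj A 1) : cobj A 1 :=
  cmap A (@smooth_mul R) (ctuple A (pair2 a b)).
Definition cconst (c : R) : cobj A 1 :=
  cmap A (@smooth_const R c) (ctuple A (@empty_fun (cobj A 1))).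
Definition czero := cconst 0.
Definition cone := cconst 1.

Definition is_ideal (I : cobj A 1 -> Prop) : Prop :=
  [/\ I czero,
      (forall a b, I a -> I b -> I (cadd a b)) &
      (forall a b, I b -> I (cmul a b))].

Definition is_unit (a : cobj A 1) : Prop := exists b, cmul a b = cone.

(* A is isomorphic to the zero C^oo-ring (the terminal functor) *)
Definition ctrivial : Prop := forall n (x y : cobj A n), x = y.

End Ops.

(* C^oo-radical: f \in rad I  iff  (A/I){f^-1} = 0.
   (A/I){f^-1} is the initial C^oo-ring under A in which I maps to 0 and f
   becomes invertible; it is 0 iff every such C^oo-ring is 0. *)
Definition cinf_radical (R : realType) (A : CinfRing R) (I : cobj A 1 -> Prop)
    (f : cobj A 1) : Prop :=
  forall (B : CinfRing R) (psi : CinfMorph A B),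
    (forall a, I a -> cfun psi a = czero B) ->
    is_unit (cfun psi f) -> ctrivial B.

(* Main.v *)
Require Import Defs.
From mathcomp Require Import all_boot all_order all_algebra.
From mathcomp Require Import all_classical all_reals all_analysis.
Set Implicit Arguments. Unset Strict Implicit. Unset Printing Implicit Defensive.
Import Order.TTheory GRing.Theory Num.Theory.

Section Aux.
Local Open Scope ring_scope.
Variable R : realType.

Lemma Ck_opp n k (g : 'rV[R]_n -> R) : Ck k g -> Ck k (fun x => - g x).
Proof.
move=> h.
have -> : (fun x => - g x) = fun x => (-1) * g x.
  by apply/funext => x; rewrite mulN1r.
by apply: Ck_mul => //; exact: Ck_cst.
Qed.

Lemma smooth_row n m (F : 'I_m -> 'rV[R]_n -> R) :
  (forall j k, Ck k (F j)) -> smooth (fun x => \row_j F j x).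
Proof.
move=> h j k.
have -> : (fun x : 'rV[R]_n => (\row_j0 F j0 x) 0 j) = F j.
  by apply/funext => x; rewrite mxE.
exact: h.
Qed.

Definition Tm : 'rV[R]_2 -> 'rV[R]_2 := fun x =>
  \row_j (if j == ord0 then x 0 ord0 - x 0 ord_max else x 0 ord_max).
Definition Zm : 'rV[R]_2 -> 'rV[R]_2 := fun x =>
  \row_j (if j == ord0 then 0 else x 0 ord_max).
Definition subm : 'rV[R]_2 -> 'rV[R]_1 := fun x =>
  \row_j (x 0 ord0 - x 0 ord_max).
Definition diagm : 'rV[R]_1 -> 'rV[R]_2 := fun x => \row_j x 0 0.
Definition zerom n : 'rV[R]_n -> 'rV[R]_1 := fun _ => \row_j 0.
Definition to0 n : 'rV[R]_n -> 'rV[R]_0 := fun _ => \row_j 0.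

Lemma smooth_Tm : smooth Tm.
Proof.
apply: smooth_row => j k; case: (j == ord0).
  by apply: Ck_add; [exact: Ck_coord | apply: Ck_opp; exact: Ck_coord].
exact: Ck_coord.
Qed.
Lemma smooth_Zm : smooth Zm.
Proof. apply: smooth_row => j k; case: (j == ord0); [exact: Ck_cst | exact: Ck_coord]. Qed.
Lemma smooth_subm : smooth subm.
Proof.
apply: smooth_row => j k.
by apply: Ck_add; [exact: Ck_coord | apply: Ck_opp; exact: Ck_coord].
Qed.
Lemma smooth_diagm : smooth diagm.
Proof. apply: smooth_row => j k; exact: Ck_coord. Qed.
Lemma smooth_zerom n : smooth (@zerom n).
Proof. apply: smooth_row => j k; exact: Ck_cst. Qed.
Lemma smooth_to0 n : smooth (@to0 n).
Proof. by move=> [j hj]. Qed.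

Section Ring.
Variable C : CinfRing R.

Lemma cmap_ext n m (f g : 'rV[R]_n -> 'rV[R]_m) (hf : smooth f) (hg : smooth g) x :
  f = g -> cmap C hf x = cmap C hg x.
Proof. move=> E; subst g; by rewrite (Prop_irrelevance hf hg). Qed.

Lemma cmap_comp' n m p (f : 'rV[R]_n -> 'rV[R]_m) (g : 'rV[R]_m -> 'rV[R]_p)
   (h : 'rV[R]_n -> 'rV[R]_p) (hf : smooth f) (hg : smooth g) (hh : smooth h) x :
  (forall v, h v = g (f v)) -> cmap C hh x = cmap C hg (cmap C hf x).
Proof.
move=> E.
have E' : h = fun v => g (f v) by apply/funext.
have hgf : smooth (fun v => g (f v)) by rewrite -E'.
by rewrite (cmap_ext hh hgf) // cmap_comp.
Qed.

Lemma cext n (u v : cobj C n) :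
  (forall i, cmap C (smooth_proj R i) u = cmap C (smooth_proj R i) v) -> u = v.
Proof.
move=> h; rewrite -(ctupleK u) -(ctupleK v); congr (ctuple C _).
by apply/funext => i; exact: h.
Qed.

Lemma cobj0 (u v : cobj C 0) : u = v.
Proof. by apply: cext => -[i hi]. Qed.

Lemma cmap_zero n (w : cobj C n) :
  cmap C (@smooth_zerom n) w = Defs.czero C.
Proof.
rewrite /Defs.czero /cconst.
rewrite (@cmap_comp' _ _ _ (@to0 n) (const_map 0) _ (@smooth_to0 n) (@smooth_const R 0)).
  by congr (cmap C _ _); exact: cobj0.
by move=> v; apply/rowP => j; rewrite !mxE.
Qed.

Lemma pair2_same (z : cobj C 1) :
  ctuple C (pair2 z z) = cmap C smooth_diagm z.
Proof.
apply: cext => i; rewrite cprojK /pair2 if_same.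
have E : (fun x : 'rV[R]_1 => x) = proj_map (ord0 : 'I_1).
  by apply/funext => v; apply/rowP => j; rewrite !mxE (ord1 j).
have hid : smooth (fun x : 'rV[R]_1 => x) by rewrite E; exact: smooth_proj.
rewrite -(@cmap_comp' _ _ _ diagm (proj_map i) (fun x => x) _ _ hid) ?cmap_id //.
by move=> v; apply/rowP => j; rewrite !mxE (ord1 j).
Qed.

End Ring.

Section Key.
Variables (A1 A2 B : CinfRing R) (phi : CinfMorph A1 A2) (psi : CinfMorph A1 B).
Variable I : cobj A2 1 -> Prop.
Hypothesis I0 : I (Defs.czero A2).
Hypothesis psiI : forall a, I (cfun phi a) -> cfun psi a = Defs.czero B.

Lemma key1 (x y : cobj A1 1) : cfun phi x = cfun phi y -> cfun psi x = cfun psi y.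
Proof.
move=> Hxy.
set s := ctuple A1 (pair2 x y).
have ex : x = cmap A1 (smooth_proj R ord0) s by rewrite cprojK.
have ey : y = cmap A1 (smooth_proj R ord_max) s by rewrite cprojK.
have -> : cfun psi x = cmap B (@smooth_add R) (cfun psi (cmap A1 smooth_Tm s)).
  rewrite ex mnat mnat -(@cmap_comp' B _ _ _ _ _ _ smooth_Tm (@smooth_add R) (smooth_proj R ord0)) //.
  by move=> v; apply/rowP => j; rewrite !mxE /= subrK.
have -> : cfun psi y = cmap B (@smooth_add R) (cfun psi (cmap A1 smooth_Zm s)).
  rewrite ey mnat mnat -(@cmap_comp' B _ _ _ _ _ _ smooth_Zm (@smooth_add R) (smooth_proj R ord_max)) //.
  by move=> v; apply/rowP => j; rewrite !mxE /= add0r.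
congr (cmap B _ _).
apply: cext => i; rewrite -!mnat.
case: i => -[|[|//]] hi.
- have -> : Ordinal hi = ord0 by apply/val_inj.
  rewrite -(@cmap_comp' _ _ _ _ _ _ _ smooth_Tm _ smooth_subm); last first.
    by move=> v; apply/rowP => j; rewrite !mxE.
  rewrite -(@cmap_comp' _ _ _ _ _ _ _ smooth_Zm _ (@smooth_zerom 2)); last first.
    by move=> v; apply/rowP => j; rewrite !mxE.
  rewrite (mnat psi (@smooth_zerom 2)) cmap_zero; apply: psiI.
  rewrite mnat.
  have -> : cfun phi s = ctuple A2 (pair2 (cfun phi x) (cfun phi x)).
    apply: cext => i; rewrite -mnat !cprojK /pair2; case: ifP => //.
  rewrite pair2_same -(@cmap_comp' _ _ _ _ _ _ _ smooth_diagm _ (@smooth_zerom 1)).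
    by rewrite cmap_zero.
  by move=> v; apply/rowP => j; rewrite !mxE /= subrr.
- have -> : Ordinal hi = ord_max by apply/val_inj.
  rewrite -(@cmap_comp' _ _ _ _ _ _ _ smooth_Tm _ (smooth_proj R ord_max)); last first.
    by move=> v; apply/rowP => j; rewrite !mxE.
  rewrite -(@cmap_comp' _ _ _ _ _ _ _ smooth_Zm _ (smooth_proj R ord_max)) //.
  by move=> v; apply/rowP => j; rewrite !mxE.
Qed.
Lemma keyn n (u v : cobj A1 n) : cfun phi u = cfun phi v -> cfun psi u = cfun psi v.
Proof.
move=> Huv; apply: cext => i; rewrite -!mnat; apply: key1.
by rewrite !mnat Huv.
Qed.
End Key.

Lemma surjn (A1 A2 : CinfRing R) (phi : CinfMorph A1 A2) :
  (forall b : cobj A2 1, exists a : cobj A1 1, cfun phi a = b) ->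
  forall n (b : cobj A2 n), exists a, cfun phi a = b.
Proof.
move=> hs n b.
have /choice [f hf] : forall i : 'I_n, exists a, cfun phi a = cmap A2 (smooth_proj R i) b.
  by move=> i; exact: hs.
exists (ctuple A1 f); apply: cext => i; by rewrite -mnat cprojK hf.
Qed.

End Aux.

Theorem lemma2p6 (R : realType) (A1 A2 : CinfRing R) (phi : CinfMorph A1 A2) :
  (forall b : cobj A2 1, exists a : cobj A1 1, cfun phi a = b) ->
  forall I : cobj A2 1 -> Prop, is_ideal I ->
  forall a : cobj A1 1,
    cinf_radical I (cfun phi a) <-> cinf_radical (fun x => I (cfun phi x)) a.
Proof.
move=> hs I [I0 _ _] a; split.
- move=> H B psi psiI hu.
  pose pre n (b : cobj A2 n) := sval (cid (surjn hs b)).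
  have preP n (b : cobj A2 n) : cfun phi (pre n b) = b by rewrite /pre; case: cid.
  have kn := keyn I0 psiI.
  have chim : forall n m (f : 'rV[R]_n -> 'rV[R]_m) (hf : smooth f) b,
      cfun psi (pre m (cmap A2 hf b)) = cmap B hf (cfun psi (pre n b)).
    by move=> n m f hf b; rewrite -mnat; apply: kn; rewrite mnat !preP.
  pose chi := @Build_CinfMorph R A2 B (fun n b => cfun psi (pre n b)) chim.
  apply: (H B chi).
    move=> b Ib /=; apply: psiI; by rewrite preP.
  rewrite /= (kn _ _ a) //; by rewrite preP.
- move=> H B psi psiI hu.
  have chim : forall n m (f : 'rV[R]_n -> 'rV[R]_m) (hf : smooth f) b,
      cfun psi (cfun phi (cmap A1 hf b)) = cmap B hf (cfun psi (cfun phi b)).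
    by move=> n m f hf b; rewrite !mnat.
  pose chi := @Build_CinfMorph R A1 B (fun n b => cfun psi (cfun phi b)) chim.
  apply: (H B chi) => //= x Ix; exact: psiI.
Qed.
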